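(* For every sequence $S\in[n]^m$ there exist a finite set $X\subset\mathbb Q\setminus[n]$ and an offline algorithm in the dynamic BST model with key set $[n]\cup X$ that serves $S$, keeps every element of $[n]$ a leaf of the tree at all times, and has total cost at most $3\,\mathrm{OPT}(S)$.
   Context: Dynamic BST model on a finite key set $K\subset\mathbb Q$: an algorithm chooses an initial BST on $K$. To serve access $s_t$ it touches a set of nodes forming a connected subtree containing the root and $s_t$, may rearrange the touched nodes into any BST shape (untouched subtrees reattached validly), and pays the number of touched nodes. $\mathrm{OPT}(S)$ is the minimum total cost of serving $S$ over all offline algorithms with key set $[n]$. *)

(* Defs.v *)
From mathcomp Require Import all_boot all_order all_algebra.
Set Implicit Arguments. Unset Strict Implicit. Unset Printing Implicit Defensive.
Import Order.TTheory GRing.Theory Num.Theory.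
Local Open Scope ring_scope.

(* Binary trees with rational keys; [Leaf] is the empty tree. *)
Inductive tree := Leaf | Node of tree & rat & tree.

Fixpoint inorder (t : tree) : seq rat :=
  if t is Node l k r then inorder l ++ k :: inorder r else [::].

Definition is_bst_on (K : seq rat) (t : tree) : Prop :=
  sorted <%R (inorder t) /\ inorder t =i K.

Fixpoint leaf_keys (t : tree) : seq rat :=
  match t with
  | Leaf => [::]
  | Node Leaf k Leaf => [:: k]
  | Node l _ r => leaf_keys l ++ leaf_keys r
  end.

(* Top part of a tree: a connected set of nodes containing the root
   (if nonempty), with holes for the hanging (untouched, possibly empty)
   subtrees, in left-to-right order. *)
Inductive ctx := Hole | CNode of ctx & rat & ctx.

Fixpoint ckeys (c : ctx) : seq rat :=
  if c is CNode l k r then ckeys l ++ k :: ckeys r else [::].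

Definition csize (c : ctx) : nat := size (ckeys c).

Inductive Fill : ctx -> seq tree -> tree -> Prop :=
  | Fill_hole t : Fill Hole [:: t] t
  | Fill_node c1 ts1 t1 k c2 ts2 t2 :
      Fill c1 ts1 t1 -> Fill c2 ts2 t2 ->
      Fill (CNode c1 k c2) (ts1 ++ ts2) (Node t1 k t2).

(* Serving access s: touch the top part c of t (containing the root and s),
   rearrange the touched nodes into another shape c', reattach the same
   untouched subtrees ts, obtaining a BST t' on K; cost = #touched nodes. *)
Definition step (K : seq rat) (s : rat) (t t' : tree) (cost : nat) : Prop :=
  exists (c c' : ctx) (ts : seq tree),
    [/\ Fill c ts t, Fill c' ts t', s \in ckeys c,
        perm_eq (ckeys c) (ckeys c') & is_bst_on K t'] /\ cost = csize c.

Inductive run (K : seq rat) (P : tree -> Prop) : tree -> seq rat -> nat -> Prop :=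
  | run_nil t : P t -> run K P t [::] 0
  | run_cons s S t t' k c :
      P t -> step K s t t' k -> run K P t' S c -> run K P t (s :: S) (k + c)%N.

Definition serves (K : seq rat) (P : tree -> Prop) (S : seq rat) (cost : nat) : Prop :=
  exists t0, is_bst_on K t0 /\ run K P t0 S cost.

Definition nkeys (n : nat) : seq rat := [seq (i%:R : rat) | i <- iota 1 n].

Definition n_leaves (n : nat) (t : tree) : Prop :=
  forall i, (0 < i <= n)%N -> (i%:R : rat) \in leaf_keys t.

Definition is_OPT (n : nat) (S : seq rat) (o : nat) : Prop :=
  serves (nkeys n) (fun _ => True) S o /\
  forall c, serves (nkeys n) (fun _ => True) S c -> (o <= c)%N.

(* Main.v *)
Require Import Defs.
From mathcomp Require Import all_boot all_order all_algebra.
From mathcomp Require Import lra zify.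
From Stdlib Require Import Classical.
Set Implicit Arguments. Unset Strict Implicit. Unset Printing Implicit Defensive.
Import Order.TTheory GRing.Theory Num.Theory.
Local Open Scope ring_scope.


Definition th : rat := 1/3.

Definition tr_g (k : rat) : seq rat := [:: k - th; k; k + th].
Definition tr_h (k : rat) : seq rat := [:: k - th; k + th].

Fixpoint tr (t : tree) : tree :=
  if t is Node l k r then Node (Node (tr l) (k - th) (Node Leaf k Leaf)) (k + th) (tr r)
  else Leaf.

Lemma inorder_tr t : inorder (tr t) = flatten (map tr_g (inorder t)).
Proof.
elim: t => [|l IHl k r IHr] //=.
by rewrite map_cat flatten_cat /= IHl IHr -!catA.
Qed.

Lemma leaf_keys_gen l k r : (l <> Leaf \/ r <> Leaf) ->
  leaf_keys (Node l k r) = leaf_keys l ++ leaf_keys r.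
Proof. by case: l => [|? ? ?]; case: r => [|? ? ?] //= [] . Qed.

Lemma leaf_keys_tr t : leaf_keys (tr t) = inorder t.
Proof.
elim: t => [|l IHl k r IHr] //.
rewrite [tr _]/= leaf_keys_gen; last by left.
rewrite leaf_keys_gen; last by right.
by rewrite IHl IHr /= -catA.
Qed.

Lemma mem_flatten_eq (g : rat -> seq rat) (s1 s2 : seq rat) :
  s1 =i s2 -> flatten (map g s1) =i flatten (map g s2).
Proof.
move=> E x; apply/flattenP/flattenP => -[y /mapP[k Hk ->] Hy];
  exists (g k) => //; apply: map_f; by rewrite ?E // -E.
Qed.

Lemma mem_gh (N : seq rat) :
  flatten (map tr_g N) =i N ++ flatten (map tr_h N).
Proof.
elim: N => [|k N IH] x //=.
rewrite !(inE, mem_cat) IH mem_cat.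
case: (x == k - th); case: (x == k); case: (x == k + th); by rewrite /= ?orbT.
Qed.

Lemma sorted_flatten_map (g : rat -> seq rat) (s : seq rat) :
  (forall k, k \in s -> sorted <%R (g k)) ->
  (forall k k', k \in s -> k' \in s -> k < k' ->
     forall x y, x \in g k -> y \in g k' -> x < y) ->
  sorted <%R s -> sorted <%R (flatten (map g s)).
Proof.
have tr_lt : transitive (@Order.lt _ rat) by move=> ? ? ?; apply: lt_trans.
elim: s => [|k s IH] // Hs Hx.
rewrite [flatten _]/= !sorted_pairwise // pairwise_cons pairwise_cat => /andP[Hk Hp].
apply/and3P; split.
- apply/allrelP => x y Hx1 /flattenP[z /mapP[k' Hk' ->] Hy].
  apply: (Hx k k') => //; first by rewrite mem_head.
    by rewrite inE Hk' orbT.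
  by move/allP: Hk; apply.
- by rewrite -sorted_pairwise // Hs ?mem_head.
- rewrite -sorted_pairwise // IH //.
  + by move=> a Ha; apply: Hs; rewrite inE Ha orbT.
  + move=> a b Ha Hb; apply: Hx; by rewrite inE ?Ha ?Hb orbT.
  + by rewrite sorted_pairwise.
Qed.


Definition Xk (n : nat) : seq rat := flatten (map tr_h (nkeys n)).

Lemma nat_gap (i j : nat) : (i%:R : rat) < j%:R -> i%:R + th < j%:R - th.
Proof.
rewrite ltr_nat => Hij.
have : ((i.+1)%:R : rat) <= j%:R by rewrite ler_nat.
rewrite -natr1 /th; lra.
Qed.

Lemma sorted_nkeys n : sorted <%R (nkeys n).
Proof.
rewrite /nkeys sorted_map.
apply: (sub_sorted _ (iota_ltn_sorted 1 n)) => i j /=; by rewrite ltr_nat.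
Qed.

Lemma nkeysP n x : reflect (exists2 i, (0 < i <= n)%N & x = i%:R) (x \in nkeys n).
Proof.
apply: (iffP mapP) => -[i Hi ->]; exists i => //; move: Hi; rewrite mem_iota;
  move/andP => [H1 H2]; apply/andP; split; lia.
Qed.

Lemma gap_gen (g : rat -> seq rat) (s : seq rat) :
  (forall k, k \in g k -> False) -> True.
Proof. by []. Qed.

Lemma cross (g : rat -> seq rat) n :
  (forall k x, x \in g k -> k - th <= x <= k + th) ->
  forall k k', k \in nkeys n -> k' \in nkeys n -> k < k' ->
     forall x y, x \in g k -> y \in g k' -> x < y.
Proof.
move=> Hg k k' /nkeysP[i _ ->] /nkeysP[j _ ->] /nat_gap Hij x y Hx Hy.
move: (Hg _ _ Hx) (Hg _ _ Hy) => /andP[? ?] /andP[? ?]; lra.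
Qed.

Lemma g_bnd k x : x \in tr_g k -> k - th <= x <= k + th.
Proof. rewrite !inE /th => /or3P[] /eqP -> ; apply/andP; split; lra. Qed.
Lemma h_bnd k x : x \in tr_h k -> k - th <= x <= k + th.
Proof. rewrite !inE /th => /orP[] /eqP -> ; apply/andP; split; lra. Qed.

Lemma sorted_Xk n : sorted <%R (Xk n).
Proof.
apply: sorted_flatten_map; last exact: sorted_nkeys.
- move=> k _ /=; rewrite /th andbT; lra.
- exact: cross h_bnd.
Qed.

Lemma uniq_Xk n : uniq (Xk n).
Proof.
apply: (sorted_uniq (@lt_trans _ rat) (@ltxx _ rat)); exact: sorted_Xk.
Qed.

Lemma Xk_disj n x : x \in Xk n -> x \notin nkeys n.
Proof.
move=> /flattenP[z /mapP[k /nkeysP[i _ ->] ->] Hx]; apply/negP => /nkeysP[j _ Ej].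
move: Hx; rewrite !inE Ej => /orP[] /eqP E.
- case: (leqP i j) => H.
  + have : (i%:R : rat) <= j%:R by rewrite ler_nat.
    move: E; rewrite /th; lra.
  + have := nat_gap (i := j) (j := i); rewrite ltr_nat => /(_ H).
    move: E; rewrite /th; lra.
- case: (leqP j i) => H.
  + have : (j%:R : rat) <= i%:R by rewrite ler_nat.
    move: E; rewrite /th; lra.
  + have := nat_gap (i := i) (j := j); rewrite ltr_nat => /(_ H).
    move: E; rewrite /th; lra.
Qed.

Lemma tr_bst n t : is_bst_on (nkeys n) t -> is_bst_on (nkeys n ++ Xk n) (tr t).
Proof.
move=> [Hs Hm]; split; rewrite inorder_tr.
- apply: sorted_flatten_map => //.
  + move=> k _ /=; rewrite /th andbT; apply/andP; split; lra.
  + move=> k k' Hk Hk'; rewrite Hm in Hk; rewrite Hm in Hk'; exact: (cross g_bnd Hk Hk').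
- move=> x; by rewrite (mem_flatten_eq _ Hm) mem_gh.
Qed.

Lemma tr_leaves n t : is_bst_on (nkeys n) t -> n_leaves n (tr t).
Proof.
move=> [_ Hm] i Hi; rewrite leaf_keys_tr Hm; apply/nkeysP; by exists i.
Qed.


Definition leafbit (s k : rat) : seq tree :=
  if k == s then [:: Leaf; Leaf] else [:: Node Leaf k Leaf].
Definition midc (s k : rat) : ctx := if k == s then CNode Hole k Hole else Hole.

Fixpoint trc (s : rat) (c : ctx) : ctx :=
  if c is CNode c1 k c2 then CNode (CNode (trc s c1) (k - th) (midc s k)) (k + th) (trc s c2)
  else Hole.

Fixpoint hl (s : rat) (ts : seq tree) (ks : seq rat) : seq tree :=
  match ts, ks with
  | t :: ts', k :: ks' => tr t :: leafbit s k ++ hl s ts' ks'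
  | _, _ => map tr ts
  end.

Definition fk (s k : rat) : seq rat :=
  k - th :: (if k == s then [:: k] else [::]) ++ [:: k + th].

Lemma fill_size c ts t : Fill c ts t -> size ts = (csize c).+1.
Proof.
elim=> // c1 ts1 t1 k c2 ts2 t2 _ IH1 _ IH2.
by rewrite size_cat IH1 IH2 /csize /= size_cat /=; lia.
Qed.

Lemma hl_split s ks1 ts1 ts2 k ks2 : size ts1 = (size ks1).+1 ->
  hl s (ts1 ++ ts2) (ks1 ++ k :: ks2) = hl s ts1 ks1 ++ leafbit s k ++ hl s ts2 ks2.
Proof.
elim: ks1 ts1 => [|k1 ks1 IH] [|t1 ts1] //=.
- by case: ts1.
- by move=> [/IH ->]; rewrite -catA.
Qed.

Lemma fill_mid s k : Fill (midc s k) (leafbit s k) (Node Leaf k Leaf).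
Proof.
rewrite /midc /leafbit; case: (k == s).
- exact: (Fill_node k (Fill_hole Leaf) (Fill_hole Leaf)).
- exact: Fill_hole.
Qed.

Lemma fill_trc s c ts t : Fill c ts t -> Fill (trc s c) (hl s ts (ckeys c)) (tr t).
Proof.
elim=> [t0|c1 ts1 t1 k c2 ts2 t2 F1 IH1 F2 IH2] /=.
- exact: Fill_hole.
- rewrite hl_split; last by rewrite (fill_size F1).
  rewrite catA.
  exact: (Fill_node (k + th) (Fill_node (k - th) IH1 (fill_mid s k)) IH2).
Qed.

Lemma ckeys_trc s c : ckeys (trc s c) = flatten (map (fk s) (ckeys c)).
Proof.
elim: c => [|c1 IH1 k c2 IH2] //=.
rewrite map_cat flatten_cat /= IH1 IH2 /fk /midc.
by case: (k == s); rewrite /= -!catA.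
Qed.

Lemma fill_subseq c ts t : Fill c ts t -> subseq (ckeys c) (inorder t).
Proof.
elim=> [t0|c1 ts1 t1 k c2 ts2 t2 _ IH1 _ IH2] /=; first exact: sub0seq.
apply: cat_subseq => //=; by rewrite eqxx.
Qed.

Lemma mem_fk s ks : s \in ks -> s \in flatten (map (fk s) ks).
Proof.
move=> Hs; apply/flattenP; exists (fk s s); first exact: map_f.
by rewrite /fk eqxx !inE eqxx orbT.
Qed.

Lemma size_fk s ks : (size (flatten (map (fk s) ks)) <= 3 * size ks)%N.
Proof.
elim: ks => [|k ks IH] //.
have -> : flatten (map (fk s) (k :: ks)) = fk s k ++ flatten (map (fk s) ks) by [].
rewrite size_cat.
have : (size (fk s k) <= 3)%N by rewrite /fk; case: (k == s).
rewrite [size (k :: ks)]/=; move: IH; lia.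
Qed.

Lemma step_tr n s t t' k :
  is_bst_on (nkeys n) t -> step (nkeys n) s t t' k ->
  exists2 k2, (k2 <= 3 * k)%N & step (nkeys n ++ Xk n) s (tr t) (tr t') k2.
Proof.
move=> [Hs Hm] [c [c' [ts [[F F' Hsc Hp Hb'] ->]]]].
have Ec : ckeys c = ckeys c'.
  have tr_lt : transitive (<%R : rel rat) by move=> ? ? ?; apply: lt_trans.
  apply: (irr_sorted_eq tr_lt (@ltxx _ rat)).
  - apply: (subseq_sorted tr_lt _ Hs). exact: fill_subseq F.
  - case: Hb' => Hs' _; apply: (subseq_sorted tr_lt _ Hs'). exact: fill_subseq F'.
  - exact: perm_mem.
exists (csize (trc s c)); first by rewrite /csize ckeys_trc; exact: size_fk.
exists (trc s c), (trc s c'), (hl s ts (ckeys c)); split => //; split.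
- exact: fill_trc.
- rewrite Ec; exact: fill_trc.
- by rewrite ckeys_trc; apply: mem_fk.
- by rewrite !ckeys_trc Ec.
- exact: tr_bst.
Qed.

Lemma run_tr n t S k :
  run (nkeys n) (fun _ => True) t S k -> is_bst_on (nkeys n) t ->
  exists2 k2, (k2 <= 3 * k)%N & run (nkeys n ++ Xk n) (n_leaves n) (tr t) S k2.
Proof.
elim=> [t0 _|s S0 t0 t1 k1 c1 _ Hst _ IH] Hb.
- exists 0%N => //; apply: run_nil; exact: (tr_leaves Hb).
- have [k2 Hk2 Hst2] := step_tr Hb Hst.
  have Hb1 : is_bst_on (nkeys n) t1 by case: Hst => [? [? [? [[? ? ? ? ?] _]]]].
  have [c2 Hc2 Hr2] := IH Hb1.
  exists (k2 + c2)%N; first by lia.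
  apply: run_cons; [exact: (tr_leaves Hb)|exact: Hst2|exact: Hr2].
Qed.


Fixpoint spine (ks : seq rat) : tree :=
  if ks is k :: ks' then Node Leaf k (spine ks') else Leaf.

Lemma inorder_spine ks : inorder (spine ks) = ks.
Proof. by elim: ks => //= k ks ->. Qed.

Fixpoint tc (t : tree) : ctx :=
  if t is Node l k r then CNode (tc l) k (tc r) else Hole.
Fixpoint lv (t : tree) : seq tree :=
  if t is Node l k r then lv l ++ lv r else [:: Leaf].

Lemma fill_tc t : Fill (tc t) (lv t) t.
Proof.
elim: t => [|l IHl k r IHr] /=; first exact: Fill_hole.
exact: (Fill_node k IHl IHr).
Qed.

Lemma ckeys_tc t : ckeys (tc t) = inorder t.
Proof. by elim: t => //= l -> k r ->. Qed.

Lemma run_exists n t (S : seq rat) : is_bst_on (nkeys n) t ->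
  all (fun x => x \in nkeys n) S ->
  exists c, run (nkeys n) (fun _ => True) t S c.
Proof.
move=> Hb; elim: S => [|s S IH] /=; first by exists 0%N; apply: run_nil.
case/andP => Hs /IH [c Hc].
exists (csize (tc t) + c)%N; apply: run_cons => //.
exists (tc t), (tc t), (lv t); split => //; split => //.
- exact: fill_tc.
- exact: fill_tc.
- by rewrite ckeys_tc; case: Hb => _ ->.
- exact: Hb.
- exact: Hc.
Qed.

Lemma min_exists (P : nat -> Prop) N : P N -> exists m, P m /\ forall c, P c -> (m <= c)%N.
Proof.
have : forall N m, (m <= N)%N -> P m -> exists m, P m /\ forall c, P c -> (m <= c)%N;
  last by move=> H HN; exact: (H N N (leqnn N) HN).
elim=> [|N0 IH] m Hm Pm.
- exists m; split => // c _; move: Hm; lia.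
- case: (classic (exists c, (c < m)%N /\ P c)) => [[c [Hc Pc]]|Hn].
  + apply: (IH c) => //; move: Hm Hc; lia.
  + exists m; split => // c Pc; case: (leqP m c) => // Hc.
    by exfalso; apply: Hn; exists c.
Qed.

Theorem mainTheorem17 (n : nat) (S : seq nat) :
  all (fun i => (0 < i <= n)%N) S ->
  exists X : seq rat,
    uniq X /\ (forall x, x \in X -> x \notin nkeys n) /\
    exists cost : nat,
      serves (nkeys n ++ X) (n_leaves n) [seq (i%:R : rat) | i <- S] cost /\
      forall c : nat,
        serves (nkeys n) (fun _ => True) [seq (i%:R : rat) | i <- S] c ->
        (cost <= 3 * c)%N.
Proof.
move=> HS.
exists (Xk n); split; first exact: uniq_Xk.
split; first exact: Xk_disj.
have Hb0 : is_bst_on (nkeys n) (spine (nkeys n)).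
  by split; rewrite inorder_spine //; exact: sorted_nkeys.
have Hall : all (fun x => x \in nkeys n) [seq (i%:R : rat) | i <- S].
  rewrite all_map; apply/allP => i Hi /=; apply/nkeysP; exists i => //.
  by move/allP: HS; apply.
have [c1 Hc1] := run_exists Hb0 Hall.
have [m [[t0 [Hb Hr]] Hm]] :=
  @min_exists (serves (nkeys n) (fun _ => True) [seq (i%:R : rat) | i <- S]) c1
    (ex_intro _ _ (conj Hb0 Hc1)).
have [k2 Hk2 Hr2] := run_tr Hr Hb.
exists k2; split.
- exists (tr t0); split => //; exact: tr_bst.
- move=> c Hc; have := Hm c Hc; move: Hk2; lia.
Qed.
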